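(* Let $P$ be a partial order on a finite set $V$. If $A$ is an antichain of $P$, then $e(P)\ge\sum_{v\in A}e(P\setminus v)$. If $S$ is a cutset of $P$, then $e(P)\le\sum_{v\in S}e(P\setminus v)$. Moreover, if $I\subseteq V$ is either a cutset or an antichain of $P$, then $e(P)=\sum_{v\in I}e(P\setminus v)$ if and only if $I$ is both a cutset and an antichain of $P$.
   Context: $e(Q)$ denotes the number of linear extensions of a finite poset $Q$, where a linear extension of a poset on an $m$-element set is an order-preserving bijection onto $[m]$ (strict order goes to strict order); the empty poset has one linear extension. $P\setminus v$ denotes the subposet of $P$ induced on $V\setminus\{v\}$. A cutset of $P$ is a subset of $V$ that intersects every maximal chain of $P$. *)

(* Defs.v *)
From mathcomp Require Import all_boot.
Set Implicit Arguments. Unset Strict Implicit. Unset Printing Implicit Defensive.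

Definition is_porder (T : finType) (le : rel T) : Prop :=
  [/\ reflexive le, antisymmetric le & transitive le].

Definition slt (T : finType) (le : rel T) : rel T := fun x y => (x != y) && le x y.

(* Injectivity into 'I_#|T|
   is equivalent to bijectivity (finite sets of the same size). *)
Definition linext (T : finType) (le : rel T) : {set {ffun T -> 'I_#|T|}} :=
  [set f : {ffun T -> 'I_#|T|} | injectiveb f &&
     [forall x, forall y, slt le x y ==> (f x < f y)%N]].

Definition nlinext (T : finType) (le : rel T) : nat := #|linext le|.

Definition delv_rel (T : finType) (le : rel T) (v : T) : rel {x : T | x != v} :=
  fun x y => le (val x) (val y).
Arguments delv_rel {T} le v.

Definition comparable (T : finType) (le : rel T) (x y : T) : bool :=
  le x y || le y x.

Definition is_chain (T : finType) (le : rel T) (C : {set T}) : bool :=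
  [forall x in C, forall y in C, comparable le x y].

Definition is_maximal_chain (T : finType) (le : rel T) (C : {set T}) : bool :=
  is_chain le C && [forall D : {set T}, (C \proper D) ==> ~~ is_chain le D].

Definition is_antichain (T : finType) (le : rel T) (A : {set T}) : bool :=
  [forall x in A, forall y in A, (x != y) ==> ~~ comparable le x y].

Definition is_cutset (T : finType) (le : rel T) (S : {set T}) : bool :=
  [forall C : {set T}, is_maximal_chain le C ==> (C :&: S != set0)].

(* Main.v *)
Require Import Defs.
From mathcomp Require Import all_boot.
Set Implicit Arguments. Unset Strict Implicit. Unset Printing Implicit Defensive.

Definition maxs (T : finType) (le : rel T) (B : {set T}) : {set T} :=
  [set m in B | [forall y in B, ~~ slt le m y]].

Definition Nset (T : finType) (le : rel T) (B : {set T}) (m : T) : {set T} :=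
  maxs le (B :\ m) :\: maxs le B.

Definition maxchainB (T : finType) (le : rel T) (B C : {set T}) : bool :=
  [&& C \subset B, is_chain le C &
   [forall D : {set T}, ((C \proper D) && (D \subset B)) ==> ~~ is_chain le D]].

Definition cutB (T : finType) (le : rel T) (B S : {set T}) : bool :=
  [forall C : {set T}, maxchainB le B C ==> (C :&: S != set0)].

Lemma in_maxs (T : finType) (le : rel T) (B : {set T}) m :
  (m \in maxs le B) = (m \in B) && [forall y in B, ~~ slt le m y].
Proof. by rewrite inE. Qed.

Lemma maxsP (T : finType) (le : rel T) (B : {set T}) m :
  reflect (m \in B /\ forall y, y \in B -> ~~ slt le m y) (m \in maxs le B).
Proof.
rewrite in_maxs; apply: (iffP andP) => [[H1 /forallP H2]|[H1 H2]]; split => //.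
- by move=> y Hy; have := H2 y; rewrite Hy.
- by apply/forallP => y; apply/implyP; apply: H2.
Qed.

Lemma sltP (T : finType) (le : rel T) (x y : T) : reflect (x <> y /\ le x y) (slt le x y).
Proof. by rewrite /slt; apply: (iffP andP) => [[/eqP ? ?]|[/eqP ? ?]]. Qed.

Lemma exists_max (T : finType) (le : rel T) (HP : is_porder le) (X : {set T}) x :
  x \in X -> exists2 c, c \in maxs le X & le x c.
Proof.
move=> Hx; case: HP => Hr Ha Ht.
set X' := [set y in X | le x y].
have Hx' : x \in X' by rewrite inE Hr Hx.
case: (@arg_maxnP T x (mem X') (fun c => #|[set y | le y c]|) Hx') => c Hc Hmax.
have /andP[HcX Hxc] : (c \in X) && le x c by move: Hc; rewrite /= inE.
exists c => //; apply/maxsP; split => // z Hz; apply/negP => /sltP [Hne Hcz].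
have Hz' : z \in X' by rewrite inE Hz (Ht _ _ _ Hxc Hcz).
have := Hmax z Hz'.
have Hpr : [set y | le y c] \proper [set y | le y z].
  apply/properP; split.
  - by apply/subsetP => y; rewrite !inE => Hy; apply: Ht Hy Hcz.
  - exists z; first by rewrite inE Hr.
    rewrite inE; apply/negP => Hzc; apply: Hne; apply: Ha; by rewrite Hcz Hzc.
move=> Hle; have Hle2 : #|[set y | le y z]| <= #|[set y | le y c]| := Hle. move: (proper_card Hpr); by rewrite ltnNge Hle2.
Qed.

Lemma maxs_sub (T : finType) (le : rel T) (B : {set T}) : maxs le B \subset B.
Proof. by apply/subsetP => x /maxsP []. Qed.

Lemma comparable_sym (T : finType) (le : rel T) (x y : T) : Defs.comparable le x y = Defs.comparable le y x.
Proof. by rewrite /Defs.comparable orbC. Qed.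

Lemma chainP (T : finType) (le : rel T) (C : {set T}) :
  reflect (forall x y, x \in C -> y \in C -> Defs.comparable le x y) (is_chain le C).
Proof.
apply: (iffP forallP) => [H x y Hx Hy|H x].
- by have := H x; rewrite Hx /= => /forallP /(_ y); rewrite Hy.
- by apply/implyP => Hx; apply/forallP => y; apply/implyP => Hy; apply: H.
Qed.

Lemma antichainP (T : finType) (le : rel T) (A : {set T}) :
  reflect (forall x y, x \in A -> y \in A -> x != y -> ~~ Defs.comparable le x y) (is_antichain le A).
Proof.
apply: (iffP forallP) => [H x y Hx Hy|H x].
- by have := H x; rewrite Hx /= => /forallP /(_ y); rewrite Hy /= => /implyP.
- by apply/implyP => Hx; apply/forallP => y; apply/implyP => Hy; apply/implyP; apply: H.
Qed.

Lemma chain_sub (T : finType) (le : rel T) (C D : {set T}) : C \subset D -> is_chain le D -> is_chain le C.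
Proof.
move=> /subsetP HCD /chainP HD; apply/chainP => x y Hx Hy; apply: HD; exact: HCD.
Qed.

Lemma maxchainP (T : finType) (le : rel T) (B C : {set T}) :
  reflect [/\ C \subset B, is_chain le C &
     forall D : {set T}, C \proper D -> D \subset B -> ~~ is_chain le D] (maxchainB le B C).
Proof.
apply: (iffP and3P) => [[H1 H2 /forallP H3]|[H1 H2 H3]]; split => //.
- by move=> D HD HDB; have := H3 D; rewrite HD HDB.
- by apply/forallP => D; apply/implyP => /andP [HD HDB]; apply: H3.
Qed.

Lemma cutBP (T : finType) (le : rel T) (B S : {set T}) :
  reflect (forall C : {set T}, maxchainB le B C -> exists2 x, x \in C & x \in S) (cutB le B S).
Proof.
apply: (iffP forallP) => [H C HC|H C].
- have := H C; rewrite HC /= => /set0Pn [x]; rewrite inE => /andP [? ?]; by exists x.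
- apply/implyP => HC; case: (H C HC) => x Hx HS; apply/set0Pn; exists x; by rewrite inE Hx HS.
Qed.

Lemma slt_le_trans (T : finType) (le : rel T) (HP : is_porder le) (x y z : T) :
  slt le x y -> le y z -> slt le x z.
Proof.
case: HP => Hr Ha Ht /sltP [Hne Hxy] Hyz; apply/sltP; split; last exact: Ht Hxy Hyz.
move=> Exz; subst z; apply: Hne; apply: Ha; by rewrite Hxy Hyz.
Qed.

Lemma le_slt_trans (T : finType) (le : rel T) (HP : is_porder le) (x y z : T) :
  le x y -> slt le y z -> slt le x z.
Proof.
case: HP => Hr Ha Ht Hxy /sltP [Hne Hyz]; apply/sltP; split; last exact: Ht Hxy Hyz.
move=> Exz; subst z; apply: Hne; apply: Ha; by rewrite Hxy Hyz.
Qed.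

Lemma slt_irr (T : finType) (le : rel T) (x : T) : slt le x x = false.
Proof. by rewrite /slt eqxx. Qed.

Lemma comp_slt (T : finType) (le : rel T) (x y : T) :
  x != y -> Defs.comparable le x y -> slt le x y \/ slt le y x.
Proof.
move=> Hne /orP [H|H]; [left|right]; rewrite /slt H andbT //; by rewrite eq_sym.
Qed.

Lemma slt_comp (T : finType) (le : rel T) (x y : T) :
  slt le x y -> Defs.comparable le x y /\ Defs.comparable le y x.
Proof. by move=> /andP [_ H]; rewrite /Defs.comparable H orbT. Qed.

Lemma notmaxs (T : finType) (le : rel T) (B : {set T}) x :
  x \in B -> x \notin maxs le B -> exists2 y, y \in B & slt le x y.
Proof.
move=> Hx; rewrite in_maxs Hx /= negb_forall => /existsP [y].
rewrite negb_imply negbK => /andP [Hy Hs]; by exists y.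
Qed.

Lemma chain_add (T : finType) (le : rel T) (HP : is_porder le) (C : {set T}) y :
  is_chain le C -> (forall z, z \in C -> Defs.comparable le y z) -> is_chain le (y |: C).
Proof.
case: HP => Hr _ _ /chainP HC Hy; apply/chainP => a b; rewrite !inE.
move=> /orP [/eqP->|Ha] /orP [/eqP->|Hb].
- by rewrite /Defs.comparable Hr.
- exact: Hy.
- by rewrite comparable_sym; apply: Hy.
- exact: HC.
Qed.

Lemma maxchain_nonempty (T : finType) (le : rel T) (HP : is_porder le) (B C : {set T}) x :
  x \in B -> maxchainB le B C -> exists c, c \in C.
Proof.
move=> Hx /maxchainP [HCB HC Hmax].
case: (set_0Vmem C) => [E|[c Hc]]; last by exists c.
exfalso; have := Hmax [set x]; rewrite E.
have -> : set0 \proper [set x] by rewrite proper0; apply/set0Pn; exists x; rewrite inE.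
rewrite sub1set Hx => /(_ isT isT); apply/negP/negPn.
by apply/chainP => a b; rewrite !inE => /eqP -> /eqP ->; rewrite /Defs.comparable; case: HP => Hr _ _; rewrite Hr.
Qed.

Lemma maxchain_top (T : finType) (le : rel T) (HP : is_porder le) (B C : {set T}) c0 :
  c0 \in C -> maxchainB le B C -> exists2 c, c \in C & c \in maxs le B.
Proof.
move=> Hc0 /maxchainP [HCB HC Hmax].
case: (exists_max HP Hc0) => c /maxsP [Hc HcC] _.
exists c => //; apply/maxsP; split; first by apply: (subsetP HCB).
move=> y Hy; apply/negP => Hcy.
have HyC : y \notin C by apply/negP => HyC; move: (HcC y HyC); rewrite Hcy.
have Hch : is_chain le (y |: C).
  apply: chain_add => // z Hz.
  have [/eqP Ezc|Hne] := boolP (z == c).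
  - by subst z; rewrite comparable_sym; case: (slt_comp Hcy).
  - move: (chainP _ _ HC z c Hz Hc) => /orP [Hzc|Hcz].
    + case: HP (Hcy) => _ _ Ht /andP [_ Hcy']; apply/orP; right; exact: Ht Hzc Hcy'.
    + by move: (HcC z Hz); rewrite /slt eq_sym Hne Hcz.
have Hpr : C \proper y |: C by rewrite properUr // sub1set.
by move: (Hmax _ Hpr); rewrite Hch subUset sub1set Hy HCB => /(_ isT).
Qed.

Lemma maxsD1 (T : finType) (le : rel T) (B : {set T}) x v :
  x \in maxs le B -> x != v -> x \in maxs le (B :\ v).
Proof.
move=> /maxsP [Hx H] Hne; apply/maxsP; split; first by rewrite !inE Hne.
move=> y; rewrite inE => /andP [_ Hy]; exact: H.
Qed.

Lemma maxsD1_ne (T : finType) (le : rel T) (B : {set T}) x v :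
  x \in maxs le (B :\ v) -> (x != v) && (x \in B).
Proof. move=> /maxsP [Hx _]; by rewrite !inE in Hx *. Qed.

Lemma inN (T : finType) (le : rel T) (B : {set T}) m u :
  (u \in Nset le B m) = (u \in maxs le (B :\ m)) && (u \notin maxs le B).
Proof. by rewrite /Nset inE andbC. Qed.

Lemma N_lt (T : finType) (le : rel T) (B : {set T}) m u :
  u \in Nset le B m -> [/\ u \in B, u != m, m \in B & slt le u m].
Proof.
rewrite inN => /andP [Hu Hnu].
have /andP [Hum HuB] := maxsD1_ne Hu.
case: (notmaxs HuB Hnu) => y Hy Hs.
have [/eqP Eym|Hne] := boolP (y == m); first by subst y; split.
move/maxsP: Hu => [_ H]; move: (H y); rewrite !inE Hne Hy Hs /= => /(_ isT) //.
Qed.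

Lemma N_empty (T : finType) (le : rel T) (HP : is_porder le) (B : {set T}) v :
  v \notin maxs le B -> Nset le B v = set0.
Proof.
move=> Hv; apply/setP => u; rewrite in_set0; apply/negP => Hu.
case: (N_lt Hu) => HuB Huv HvB Hs.
case: (notmaxs HvB Hv) => z Hz Hvz.
have Huz : slt le u z by apply: slt_le_trans Hs _ => //; case/andP: Hvz.
move: Hu; rewrite inN => /andP [/maxsP [_ H] _].
have Hzv : z != v by apply/negP => /eqP E; subst z; rewrite slt_irr in Hvz.
by move: (H z); rewrite !inE Hzv Hz Huz /= => /(_ isT).
Qed.

Definition Xset (T : finType) (le : rel T) (A B : {set T}) (m : T) : {set T} :=
  (A :\ m) :|: (if m \in A then Nset le B m else set0).

Lemma inX (T : finType) (le : rel T) (A B : {set T}) m x :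
  x \in Xset le A B m -> x \in A :\ m \/ (m \in A /\ x \in Nset le B m).
Proof.
rewrite /Xset inE => /orP [H|]; first by left.
by case: (m \in A) => //; [right | rewrite inE].
Qed.

Lemma X_sub (T : finType) (le : rel T) (A B : {set T}) m :
  A \subset B -> Xset le A B m \subset B :\ m.
Proof.
move=> /subsetP HAB; apply/subsetP => x /inX [|[_ Hx]].
- by rewrite !inE => /andP [-> /HAB ->].
- by case: (N_lt Hx) => H1 H2 _ _; rewrite !inE H1 H2.
Qed.

Lemma X_antichain (T : finType) (le : rel T) (HP : is_porder le) (A B : {set T}) m :
  A \subset B -> is_antichain le A -> is_antichain le (Xset le A B m).
Proof.
move=> /subsetP HAB /antichainP HA; apply/antichainP => x y Hx Hy Hne.
have key : forall a u, a \in A :\ m -> m \in A -> u \in Nset le B m -> a != u ->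
    ~~ Defs.comparable le a u.
  move=> a u /setD1P [Ham Ha] HmA Hu Hau; apply/negP => Hc.
  case: (N_lt Hu) => HuB Hum HmB Hum'.
  case: (comp_slt Hau Hc) => Hs.
  - have Ham' : slt le a m by apply: slt_le_trans Hs _ => //; case/andP: Hum'.
    by case: (slt_comp Ham') => Hc' _; move: (HA a m Ha HmA Ham); rewrite Hc'.
  - move: Hu; rewrite inN => /andP [/maxsP [_ H] _].
    by move: (H a); rewrite !inE Ham HAB // Hs /= => /(_ isT).
case: (inX Hx) => [Hx'|[HmA Hx']]; case: (inX Hy) => [Hy'|[HmA' Hy']].
- by move: Hx' Hy'; rewrite !inE => /andP [_ ?] /andP [_ ?]; apply: HA.
- exact: key Hx' HmA' Hy' Hne.
- by rewrite comparable_sym; apply: key Hy' HmA Hx' _; rewrite eq_sym.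
- apply/negP => Hc; case: (comp_slt Hne Hc) => Hs.
  + move: Hx'; rewrite inN => /andP [/maxsP [_ H] _].
    by move: (H y) Hy'; rewrite Hs inN => /implyP; rewrite implybF => /negP Hn /andP [/maxsP [Hyy _] _].
  + move: Hy'; rewrite inN => /andP [/maxsP [_ H] _].
    by move: (H x) Hx'; rewrite Hs inN => /implyP; rewrite implybF => /negP Hn /andP [/maxsP [Hyy _] _].
Qed.

Lemma X_disjoint (T : finType) (le : rel T) (HP : is_porder le) (A B : {set T}) m :
  is_antichain le A -> m \in A -> (A :\ m) :&: Nset le B m = set0.
Proof.
move=> /antichainP HA HmA; apply/setP => x; rewrite in_setI in_set0; apply/negP.
move=> /andP [/setD1P [Hxm HxA] Hx]; case: (N_lt Hx) => _ _ _ Hs.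
by case: (slt_comp Hs) => Hc _; move: (HA x m HxA HmA Hxm); rewrite Hc.
Qed.

Lemma not_maxchain (T : finType) (le : rel T) (B C : {set T}) :
  C \subset B -> is_chain le C -> ~~ maxchainB le B C ->
  exists D : {set T}, [/\ C \proper D, D \subset B & is_chain le D].
Proof.
move=> H1 H2; rewrite /maxchainB H1 H2 /= negb_forall => /existsP [D].
by rewrite negb_imply negbK => /andP [/andP [H3 H4] H5]; exists D.
Qed.

Lemma inX_l (T : finType) (le : rel T) (A B : {set T}) m x :
  x \in A -> x != m -> x \in Xset le A B m.
Proof. by move=> Hx Hxm; rewrite /Xset inE !inE Hx Hxm. Qed.

Lemma inX_r (T : finType) (le : rel T) (A B : {set T}) m x :
  m \in A -> x \in Nset le B m -> x \in Xset le A B m.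
Proof. by move=> Hm Hx; rewrite /Xset inE Hm Hx orbT. Qed.

Lemma X_cut (T : finType) (le : rel T) (HP : is_porder le) (A B : {set T}) m x0 :
  m \in maxs le B -> x0 \in B :\ m -> cutB le B A -> cutB le (B :\ m) (Xset le A B m).
Proof.
move=> Hm Hx0 /cutBP HA; apply/cutBP => C HC.
move/maxchainP: (HC) => [HCB HCc HCmax].
have HmC : m \notin C by apply/negP => /(subsetP HCB); rewrite !inE eqxx.
have HCB2 : C \subset B by apply: subset_trans HCB (subD1set B m).
have HmB : m \in B by case/maxsP: Hm.
case: (boolP (maxchainB le B C)) => HCB'.
  case: (HA C HCB') => x HxC HxA; exists x => //; apply: inX_l => //.
  by apply/negP => /eqP E; subst x; rewrite HxC in HmC.
case: (not_maxchain HCB2 HCc HCB') => D [HCD HDB HDc].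
have HmD : m \in D.
  apply/negP => HmD; have HDB2 : D \subset B :\ m.
    by apply/subsetP => y Hy; rewrite !inE (subsetP HDB _ Hy) andbT; apply/negP => /eqP E; subst y; rewrite Hy in HmD.
  by move: (HCmax D HCD HDB2); rewrite HDc.
have HC'max : maxchainB le B (m |: C).
  apply/maxchainP; split.
  - by rewrite subUset sub1set HmB HCB2.
  - apply: chain_sub HDc; rewrite subUset sub1set HmD; by case/andP: HCD.
  - move=> E HE HEB; apply/negP => HEc.
    have HCE : C \proper E :\ m.
      case/properP: HE => HsE [e HeE Hne]; apply/properP; split.
      + apply/subsetP => y Hy; rewrite !inE (subsetP HsE) ?inE ?Hy ?orbT // andbT.
        by apply/negP => /eqP E1; subst y; rewrite Hy in HmC.
      + exists e; first by rewrite !inE HeE andbT; apply/negP => /eqP E1; subst e; rewrite !inE eqxx in Hne.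
        by apply/negP => HeC; rewrite !inE HeC orbT in Hne.
    have HEB2 : E :\ m \subset B :\ m by apply: setSD.
    by move: (HCmax _ HCE HEB2); rewrite (chain_sub (subD1set E m) HEc).
case: (HA _ HC'max) => x; rewrite !inE => /orP [/eqP Exm|HxC] HxA; last first.
  exists x => //; apply: inX_l => //.
  by apply/negP => /eqP E; subst x; rewrite HxC in HmC.
subst x.
case: (maxchain_nonempty HP Hx0 HC) => c0 Hc0.
case: (maxchain_top HP Hc0 HC) => c HcC Hcmax.
exists c => //; apply: inX_r => //; rewrite inN Hcmax /=.
have HcD : c \in D by apply: (subsetP (proper_sub HCD)).
have Hcm : c != m by apply/negP => /eqP E; subst c; rewrite HcC in HmC.
move/chainP: HDc => /(_ c m HcD HmD) /(comp_slt Hcm) [Hs|Hs].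
- apply/negP => /maxsP [_ H]; by move: (H m HmB); rewrite Hs.
- by case/maxsP: Hm => _ H; move: (H c (subsetP HDB _ HcD)); rewrite Hs.
Qed.

Lemma X_inA (T : finType) (le : rel T) (A B : {set T}) m x :
  m \notin A -> x \in Xset le A B m -> x \in A.
Proof. by move=> Hm /inX [/setD1P [_ ->]|[H _]] //; rewrite H in Hm. Qed.

Lemma cut_from_X (T : finType) (le : rel T) (HP : is_porder le) (A B : {set T}) x0 :
  x0 \in B -> (forall m, m \in maxs le B -> cutB le (B :\ m) (Xset le A B m)) ->
  cutB le B A.
Proof.
move=> Hx0 HX; apply/cutBP => C HC.
move/maxchainP: (HC) => [HCB HCc HCmax].
case: (maxchain_nonempty HP Hx0 HC) => c0 Hc0.
case: (maxchain_top HP Hc0 HC) => c HcC Hcmax.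
case: (boolP (c \in A)) => HcA; first by exists c.
case: (boolP [exists m in maxs le B, m != c]).
  move=> /existsP [m' /andP [Hm' Hm'c]].
  have Hm'C : m' \notin C.
    apply/negP => Hm'C; move/chainP: HCc => /(_ m' c Hm'C HcC) /(comp_slt Hm'c) [Hs|Hs].
    - by case/maxsP: Hm' => Hm'B H; move: (H c); rewrite Hs (subsetP HCB _ HcC) => /(_ isT).
    - by case/maxsP: Hcmax => HcB H; move: (H m'); rewrite Hs (subsetP HCB _ Hm'C) => /(_ isT).
  have HC' : maxchainB le (B :\ m') C.
    apply/maxchainP; split => //.
    - apply/subsetP => y Hy; rewrite !inE (subsetP HCB _ Hy) andbT.
      by apply/negP => /eqP E; subst y; rewrite Hy in Hm'C.
    - by move=> D HD HDB; apply: HCmax HD (subset_trans HDB (subD1set B m')).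
  move/cutBP: (HX m' Hm') => /(_ C HC') [x HxC HxX].
  case: (inX HxX) => [/setD1P [_ HxA]|[_ HxN]]; first by exists x.
  exfalso.
  have HxB : x \in B by case: (N_lt HxN).
  have [/eqP Exc|Hxc] := boolP (x == c).
    by subst x; move: HxN; rewrite inN Hcmax andbF.
  move/chainP: HCc => /(_ x c HxC HcC) /(comp_slt Hxc) [Hs|Hs].
  - move: HxN; rewrite inN => /andP [/maxsP [_ H] _]; move: (H c).
    rewrite Hs !inE (subsetP HCB _ HcC) andbT eq_sym Hm'c => /(_ isT) //.
  - by case/maxsP: Hcmax => HcB H; move: (H x); rewrite Hs HxB => /(_ isT).
rewrite negb_exists => /forallP Hall.
have Honly : forall m, m \in maxs le B -> m = c.
  by move=> m Hm; move: (Hall m); rewrite Hm /= negbK => /eqP.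
have HC' : maxchainB le (B :\ c) (C :\ c).
  apply/maxchainP; split.
  - exact: setSD.
  - exact: chain_sub (subD1set C c) HCc.
  - move=> D HD HDB; apply/negP => HDc.
    have HcB : c \in B by case/maxsP: Hcmax.
    have HcDc : is_chain le (c |: D).
      apply: chain_add => // z Hz.
      have HzB : z \in B by move: (subsetP HDB _ Hz); rewrite inE => /andP [].
      case: (exists_max HP HzB) => m Hm Hzm; rewrite (Honly m Hm) in Hzm.
      by rewrite /Defs.comparable Hzm orbT.
    have HCpr : C \proper c |: D.
      case/properP: HD => HsD [e HeD HeC]; apply/properP; split.
      + apply/subsetP => y Hy; rewrite !inE.
        have [/eqP ->|Hyc] := boolP (y == c); first by rewrite ?eqxx ?set11.
        by rewrite (subsetP HsD) ?orbT // !inE Hyc Hy.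
      + exists e; first by rewrite !inE HeD orbT.
        have Hec : e != c by move: (subsetP HDB _ HeD); rewrite !inE => /andP [].
        by apply/negP => HeC'; move: HeC; rewrite !inE Hec HeC'.
    have HcDB : c |: D \subset B by rewrite subUset sub1set HcB (subset_trans HDB (subD1set B c)).
    by move: (HCmax _ HCpr HcDB); rewrite HcDc.
move/cutBP: (HX c Hcmax) => /(_ _ HC') [x /setD1P [_ HxC] HxX].
by exists x => //; apply: X_inA HxX.
Qed.

Lemma eq_sym_ne (T : eqType) (x y : T) : x != y -> y != x.
Proof. by rewrite eq_sym. Qed.

Lemma anti_from_X (T : finType) (le : rel T) (HP : is_porder le) (A B : {set T}) :
  A \subset B ->
  (forall m, m \in maxs le B ->
     is_antichain le (Xset le A B m) /\ (m \in A -> (A :\ m) :&: Nset le B m = set0)) ->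
  is_antichain le A.
Proof.
move=> /subsetP HAB HX.
have key : forall a b, a \in A -> b \in A -> slt le a b -> False.
  move=> a b Ha Hb Hab.
  have Hanb : a != b by case/andP: Hab.
  have [Ca _] := slt_comp Hab.
  case: (exists_max HP (HAB _ Hb)) => m Hm Hbm.
  have [/eqP Ebm|Hbm'] := boolP (b == m); last first.
    have Ham : a != m.
      apply/negP => /eqP E; subst a; case/maxsP: Hm => _ H.
      by move: (H b (HAB _ Hb)); rewrite Hab.
    case: (HX m Hm) => /antichainP Hanti _.
    by move: (Hanti a b (inX_l _ _ Ha Ham) (inX_l _ _ Hb Hbm') Hanb); rewrite Ca.
  subst m.
  case: (HX b Hm) => /antichainP Hanti Hdisj.
  have HaN : a \notin Nset le B b.
    apply/negP => HaN; move: (Hdisj Hb) => /setP /(_ a).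
    by rewrite in_setI in_set0 HaN andbT !inE Hanb Ha.
  have HaBb : a \in B :\ b by rewrite !inE Hanb HAB.
  have Hanm : a \notin maxs le B.
    apply/negP => /maxsP [_ H]; by move: (H b (HAB _ Hb)); rewrite Hab.
  have Hanm2 : a \notin maxs le (B :\ b) by move: HaN; rewrite inN Hanm andbT.
  case: (notmaxs HaBb Hanm2) => y Hy Hay.
  case: (exists_max HP Hy) => x Hx Hyx.
  have Hax : slt le a x by apply: slt_le_trans Hay Hyx.
  have Haxne : a != x by case/andP: Hax.
  have [Cax _] := slt_comp Hax.
  have /andP [Hxb HxB] := maxsD1_ne Hx.
  case: (boolP (x \in maxs le B)) => Hxm.
    case: (HX x Hxm) => /antichainP Hanti2 _.
    by move: (Hanti2 a b (inX_l _ _ Ha Haxne) (inX_l _ _ Hb (eq_sym_ne Hxb)) Hanb); rewrite Ca.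
  have HxN : x \in Nset le B b by rewrite inN Hx Hxm.
  by move: (Hanti a x (inX_l _ _ Ha Hanb) (inX_r Hb HxN) Haxne); rewrite Cax.
apply/antichainP => x y Hx Hy Hne; apply/negP => Hc.
by case: (comp_slt Hne Hc) => Hs; [apply: (key x y) | apply: (key y x)].
Qed.

Definition LEset (T : finType) (le : rel T) (B : {set T}) : {set {ffun T -> 'I_#|T|.+1}} :=
  [set f : {ffun T -> 'I_#|T|.+1} |
     [&& [forall x, (x \notin B) ==> (f x == ord0)],
         [forall x in B, (0 < f x <= #|B|)%N],
         [forall x in B, forall y in B, (f x == f y) ==> (x == y)] &
         [forall x in B, forall y in B, slt le x y ==> (f x < f y)%N]]].

Definition LE (T : finType) (le : rel T) (B : {set T}) : nat := #|LEset le B|.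

Lemma LEsetP (T : finType) (le : rel T) (B : {set T}) (f : {ffun T -> 'I_#|T|.+1}) :
  reflect [/\ forall x, x \notin B -> f x = ord0,
              forall x, x \in B -> (0 < f x <= #|B|)%N,
              forall x y, x \in B -> y \in B -> f x = f y -> x = y &
              forall x y, x \in B -> y \in B -> slt le x y -> (f x < f y)%N]
          (f \in LEset le B).
Proof.
rewrite inE; apply: (iffP and4P) => [[/forallP H1 /forallP H2 /forallP H3 /forallP H4]|[H1 H2 H3 H4]]; split.
- by move=> x Hx; move: (H1 x); rewrite Hx => /eqP.
- by move=> x Hx; move: (H2 x); rewrite Hx.
- by move=> x y Hx Hy E; move: (H3 x); rewrite Hx => /forallP /(_ y); rewrite Hy E eqxx => /eqP.
- by move=> x y Hx Hy E; move: (H4 x); rewrite Hx => /forallP /(_ y); rewrite Hy E.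
- by apply/forallP => x; apply/implyP => Hx; rewrite H1.
- by apply/forallP => x; apply/implyP => Hx; rewrite H2.
- apply/forallP => x; apply/implyP => Hx; apply/forallP => y; apply/implyP => Hy.
  by apply/implyP => /eqP E; rewrite (H3 x y Hx Hy E).
- apply/forallP => x; apply/implyP => Hx; apply/forallP => y; apply/implyP => Hy.
  by apply/implyP => E; apply: H4.
Qed.

Lemma card_range (N k : nat) : k <= N ->
  #|[set i : 'I_N.+1 | (0 < i <= k)%N]| = k.
Proof.
move=> HkN.
have -> : [set i : 'I_N.+1 | (0 < i <= k)%N] = [set inord i.+1 | i : 'I_k].
  apply/setP => j; rewrite inE; apply/idP/imsetP.
  - move=> /andP [Hj0 Hjk]; have Hj : (j.-1 < k)%N by rewrite prednK.
    exists (Ordinal Hj) => //; apply: val_inj => /=; rewrite prednK // inordK //.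
  - move=> [i _ ->]; rewrite inordK ?ltnS //; last by apply: leq_trans (ltn_ord i) HkN.
    by rewrite /=.
rewrite card_imset ?card_ord // => i i' /(congr1 val) /=.
rewrite !inordK ?ltnS; first by move=> [] /val_inj.
- by apply: leq_trans (ltn_ord i') HkN.
- by apply: leq_trans (ltn_ord i) HkN.
Qed.

Lemma top_exists (T : finType) (le : rel T) (B : {set T}) (f : {ffun T -> 'I_#|T|.+1}) :
  f \in LEset le B -> (0 < #|B|)%N -> exists2 m, m \in B & nat_of_ord (f m) = #|B|.
Proof.
move=> /LEsetP [H1 H2 H3 H4] HB.
have HBT : (#|B| <= #|T|)%N by apply: max_card.
set K := [set i : 'I_#|T|.+1 | (0 < i <= #|B|)%N].
have HfK : f @: B \subset K by apply/subsetP => j /imsetP [x Hx ->]; rewrite inE H2.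
have Hcard : #|f @: B| = #|B| by rewrite card_in_imset // => x y Hx Hy; apply: H3.
have HE : f @: B = K.
  by apply/eqP; rewrite eqEcard HfK Hcard card_range ?leqnn.
have : inord #|B| \in K by rewrite inE inordK ?ltnS // HB leqnn.
rewrite -HE => /imsetP [m Hm Em]; exists m => //.
by rewrite -Em inordK // ltnS.
Qed.

Lemma LE_fiber (T : finType) (le : rel T) (B : {set T}) m :
  m \in maxs le B ->
  #|[set f in LEset le B | nat_of_ord (f m) == #|B|]| = LE le (B :\ m).
Proof.
move=> Hm; have /maxsP [HmB Hmax] := Hm.
have HBT : (#|B| <= #|T|)%N by apply: max_card.
have Hc : #|B| = (#|B :\ m|).+1 by rewrite (cardsD1 m B) HmB.
set n := #|B|.
pose phi (g : {ffun T -> 'I_#|T|.+1}) := [ffun x => if x == m then inord n else g x].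
have Hphi : forall g, g \in LEset le (B :\ m) -> phi g \in LEset le B.
  move=> g /LEsetP [H1 H2 H3 H4]; apply/LEsetP; split.
  - move=> x Hx; rewrite ffunE; have -> : (x == m) = false.
      by apply/negP => /eqP E; subst x; rewrite HmB in Hx.
    by apply: H1; rewrite !inE negb_and Hx orbT.
  - move=> x Hx; rewrite ffunE; case: eqP => [_|/eqP Hxm].
    + by rewrite inordK ?ltnS // /n Hc leqnn.
    + have := H2 x; rewrite !inE Hxm Hx => /(_ isT) /andP [-> Hle] /=.
      by rewrite /n Hc (leq_trans Hle).
  - move=> x y Hx Hy; rewrite !ffunE.
    case: eqP => [->|/eqP Hxm]; case: eqP => [->|/eqP Hym] // E.
    + have := H2 y; rewrite !inE Hym Hy => /(_ isT) /andP [_].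
      by rewrite -E inordK ?ltnS // /n Hc ltnn.
    + have := H2 x; rewrite !inE Hxm Hx => /(_ isT) /andP [_].
      by rewrite E inordK ?ltnS // /n Hc ltnn.
    + by apply: H3 => //; rewrite !inE ?Hxm ?Hym ?Hx ?Hy.
  - move=> x y Hx Hy Hs; rewrite !ffunE.
    case: eqP => [Exm|/eqP Hxm].
      by subst x; move: (Hmax y Hy); rewrite Hs.
    case: eqP => [Eym|/eqP Hym].
      have := H2 x; rewrite !inE Hxm Hx => /(_ isT) /andP [_ Hle].
      by rewrite inordK ?ltnS // /n Hc ltnS.
    by apply: H4 => //; rewrite !inE ?Hxm ?Hym ?Hx ?Hy.
have -> : [set f in LEset le B | nat_of_ord (f m) == n] = phi @: LEset le (B :\ m).
  apply/setP => f; rewrite inE; apply/andP/imsetP.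
  - move=> [Hf /eqP Hfm]; have /LEsetP [H1 H2 H3 H4] := Hf.
    pose g := [ffun x => if x == m then ord0 else f x].
    exists g.
    + apply/LEsetP; split.
      * move=> x; rewrite ffunE !inE negb_and negbK; case: eqP => //= _ Hx; exact: H1.
      * move=> x; rewrite ffunE !inE => /andP [Hxm Hx]; rewrite (negbTE Hxm).
        have /andP [-> Hle] := H2 x Hx; rewrite /=.
        rewrite -ltnS -Hc ltn_neqAle Hle andbT; apply/negP => /eqP E.
        by move/eqP: Hxm; apply; apply: H3 => //; apply: val_inj; rewrite /= E Hfm.
      * move=> x y; rewrite !inE !ffunE => /andP [Hxm Hx] /andP [Hym Hy].
        rewrite (negbTE Hxm) (negbTE Hym); exact: H3.
      * move=> x y; rewrite !inE !ffunE => /andP [Hxm Hx] /andP [Hym Hy].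
        rewrite (negbTE Hxm) (negbTE Hym); exact: H4.
    + apply/ffunP => x; rewrite !ffunE; case: eqP => [->|_] //.
      by apply: val_inj; rewrite /= inordK ?ltnS // Hfm.
  - move=> [g Hg ->]; split; first exact: Hphi.
    by rewrite ffunE eqxx inordK ?ltnS.
rewrite card_in_imset // => g g' Hg Hg' E; apply/ffunP => x.
have /LEsetP [H1 _ _ _] := Hg; have /LEsetP [H1' _ _ _] := Hg'.
have [->|Hxm] := eqVneq x m.
  by rewrite H1 ?H1' // !inE eqxx.
by move/ffunP: E => /(_ x); rewrite !ffunE (negbTE Hxm).
Qed.

Lemma sum_bool_card (I : finType) (X : {set I}) (P : pred I) :
  \sum_(i in X) (P i : nat) = #|[set i in X | P i]|.
Proof.
rewrite -sum1_card big_mkcond /= [RHS]big_mkcond /=; apply: eq_bigr => i _.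
by rewrite inE; case: (i \in X); case: (P i).
Qed.

Lemma LE_rec (T : finType) (le : rel T) (B : {set T}) :
  (0 < #|B|)%N -> LE le B = \sum_(m in maxs le B) LE le (B :\ m).
Proof.
move=> HB.
have Hin : forall f, f \in LEset le B -> \sum_(m in B) (nat_of_ord (f m) == #|B| : nat) = 1.
  move=> f Hf; case: (top_exists Hf HB) => m0 Hm0 Ef.
  rewrite (bigD1 m0) //= Ef eqxx big1 // => m /andP [Hm Hne].
  have /LEsetP [_ _ H3 _] := Hf.
  case: eqP => // E; move/eqP: Hne; case; apply: H3 => //; apply: val_inj; by rewrite /= E Ef.
rewrite /LE -sum1_card.
rewrite (eq_bigr (fun f : {ffun T -> 'I_#|T|.+1} => \sum_(m in B) (nat_of_ord (f m) == #|B| : nat))); last first.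
  by move=> f Hf; rewrite Hin.
rewrite exchange_big /=.
rewrite (big_setID (maxs le B)) /= (setIidPr (maxs_sub le B)).
rewrite [X in (_ + X)%N]big1 ?addn0; last first.
  move=> m; rewrite inE => /andP [Hnm HmB].
  rewrite sum_bool_card; apply/eqP; rewrite cards_eq0; apply/eqP/setP => f; rewrite in_set0 inE.
  apply/negP => /andP [Hf /eqP Ef].
  case: (notmaxs HmB Hnm) => y Hy Hs.
  have /LEsetP [_ H2 _ H4] := Hf.
  have := H4 _ _ HmB Hy Hs; rewrite Ef ltnNge.
  by have /andP [_ ->] := H2 y Hy.
apply: eq_bigr => m Hm; by rewrite sum_bool_card LE_fiber.
Qed.

Lemma LE_pos (T : finType) (le : rel T) (HP : is_porder le) (B : {set T}) :
  (0 < LE le B)%N.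
Proof.
move: {2}#|B| (erefl #|B|) => n; elim: n B => [|n IH] B HB.
  have -> : B = set0 by apply/eqP; rewrite -cards_eq0 HB.
  rewrite /LE card_gt0; apply/set0Pn; exists [ffun => ord0]; apply/LEsetP; split.
  - by move=> x _; rewrite ffunE.
  - by move=> x; rewrite inE.
  - by move=> x y; rewrite inE.
  - by move=> x y; rewrite inE.
rewrite LE_rec ?HB //.
have : (0 < #|B|)%N by rewrite HB.
rewrite card_gt0 => /set0Pn [x Hx].
case: (exists_max HP Hx) => m Hm _.
rewrite (bigD1 m) //=; apply: leq_trans (leq_addr _ _).
apply: IH; move/maxsP: Hm => [HmB _].
by move: HB; rewrite (cardsD1 m B) HmB add1n => [[]].
Qed.

Lemma bridge (T U : finType) (le : rel T) (leU : rel U) (h : U -> T) :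
  injective h -> (forall x y, leU x y = le (h x) (h y)) ->
  nlinext leU = LE le (h @: setT).
Proof.
move=> hinj Hle.
set B := h @: setT.
have HcB : #|B| = #|U| by rewrite card_imset // cardsT.
have HBT : (#|B| <= #|T|)%N by apply: max_card.
have HUT : (#|U| <= #|T|)%N by rewrite -HcB.
have Hpick : forall u, [pick u' | h u' == h u] = Some u.
  move=> u; case: pickP => [u' /eqP /hinj -> //|H]; by have := H u; rewrite eqxx.
have Hpick0 : forall t, t \notin B -> [pick u' | h u' == t] = None.
  move=> t Ht; case: pickP => [u' /eqP E|//]; by move: Ht; rewrite -E imset_f ?inE.
have HsltU : forall x y, slt leU x y = slt le (h x) (h y).
  by move=> x y; rewrite /slt Hle (inj_eq hinj).
pose psi (F : {ffun U -> 'I_#|U|}) : {ffun T -> 'I_#|T|.+1} :=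
  [ffun t => if [pick u | h u == t] is Some u then inord (F u).+1 else ord0].
have psi_h : forall F u, nat_of_ord (psi F (h u)) = (F u).+1.
  by move=> F u; rewrite ffunE Hpick inordK // ltnS (leq_trans (ltn_ord (F u))).
have linP : forall F, F \in linext leU ->
    injective F /\ (forall x y, slt leU x y -> (F x < F y)%N).
  move=> F; rewrite inE => /andP [/injectiveP Hi /forallP Ho]; split => // x y Hs.
  by move: (Ho x) => /forallP /(_ y); rewrite Hs.
have HBmem : forall t, t \in B -> exists u, t = h u.
  by move=> t /imsetP [u _ ->]; exists u.
rewrite /nlinext /LE.
have -> : LEset le B = psi @: linext leU.
  apply/setP => f; apply/idP/imsetP.
  - move=> /LEsetP [H1 H2 H3 H4].
    have pf : forall u, ((f (h u)).-1 < #|U|)%N.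
      move=> u; have /andP [Hp Hl] := H2 (h u) (imset_f _ (in_setT u)).
      by rewrite -HcB prednK.
    pose F := [ffun u => Ordinal (pf u)].
    have Fv : forall u, nat_of_ord (F u) = (f (h u)).-1 by move=> u; rewrite ffunE.
    have hB : forall u, h u \in B by move=> u; apply: imset_f; rewrite inE.
    exists F.
    + rewrite inE; apply/andP; split.
      * apply/injectiveP => x y /(congr1 val) /=; rewrite !ffunE /=.
        have /andP [Hx _] := H2 _ (hB x); have /andP [Hy _] := H2 _ (hB y).
        move=> E; apply: hinj; apply: H3 => //; apply: val_inj.
        by move/(congr1 S): E; rewrite !prednK.
      * apply/forallP => x; apply/forallP => y; apply/implyP => Hs.
        rewrite !Fv; have /andP [Hx _] := H2 _ (hB x); have /andP [Hy _] := H2 _ (hB y).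
        rewrite -ltnS prednK // (ltn_predK (H4 _ _ (hB x) (hB y) _)) ?H4 //; by rewrite -HsltU.
    + apply/ffunP => t; rewrite ffunE.
      case: (boolP (t \in B)) => Ht; last by rewrite Hpick0 // H1.
      case: (HBmem t Ht) => u ->; rewrite Hpick; apply: val_inj; rewrite /= inordK Fv.
      * by rewrite prednK //; have /andP [] := H2 _ (hB u).
      * by rewrite ltnS; apply: leq_trans (pf u) HUT.
  - move=> [F HF ->]; case: (linP F HF) => Hi Ho; apply/LEsetP; split.
    + by move=> t Ht; rewrite ffunE Hpick0.
    + move=> t Ht; case: (HBmem t Ht) => u ->; by rewrite psi_h HcB /=.
    + move=> t s Ht Hs; case: (HBmem t Ht) => u ->; case: (HBmem s Hs) => u' ->.
      by move=> /(congr1 val) /=; rewrite !psi_h => [[]] /val_inj /Hi ->.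
    + move=> t s Ht Hs; case: (HBmem t Ht) => u ->; case: (HBmem s Hs) => u' ->.
      by rewrite !psi_h ltnS -HsltU => /Ho.
rewrite card_in_imset // => F G HF HG E.
case: (linP F HF) => _ _; apply/ffunP => u; apply: val_inj.
by move/ffunP: E => /(_ (h u)) /(congr1 val) /=; rewrite -!/(nat_of_ord _) !psi_h => [[]].
Qed.

Lemma sum_setU (I : finType) (X Y : {set I}) (F : I -> nat) :
  (\sum_(i in X :|: Y) F i + \sum_(i in X :&: Y) F i =
   \sum_(i in X) F i + \sum_(i in Y) F i)%N.
Proof.
rewrite (big_setID X) /= setUK setDUl setDv set0U.
rewrite [in RHS](big_setID X (A := Y)) /= (setIC Y X).
by rewrite -addnA [(\sum_(i in Y :\: X) F i + _)%N]addnC.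
Qed.

Lemma sum_pos_empty (I : finType) (X : {set I}) (F : I -> nat) :
  (forall i, 0 < F i)%N -> \sum_(i in X) F i = 0%N -> X = set0.
Proof.
move=> HF H; apply/setP => i; rewrite in_set0; apply/negP => Hi.
by move: H; rewrite (bigD1 i) //=; move: (HF i); case: (F i).
Qed.

Lemma sum_pointwise (I : finType) (X : {set I}) (a b : I -> nat) :
  (forall i, i \in X -> a i <= b i)%N -> \sum_(i in X) a i = \sum_(i in X) b i ->
  forall i, i \in X -> a i = b i.
Proof.
move=> Hle Hs i Hi; apply/eqP; rewrite eqn_leq Hle //=; rewrite leqNgt; apply/negP => Hlt.
move: Hs; rewrite (bigD1 i) //= [in RHS](bigD1 i) //= => E.
have : (a i + \sum_(j in X | j != i) a j < b i + \sum_(j in X | j != i) b j)%N.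
  rewrite -addSn; apply: leq_add => //; apply: leq_sum => j /andP [Hj _]; exact: Hle.
by rewrite E ltnn.
Qed.

Lemma setD1C (T : finType) (B : {set T}) x y : B :\ x :\ y = B :\ y :\ x.
Proof. by apply/setP => z; rewrite !inE; do 2 case: (_ == _). Qed.

Definition gval (T : finType) (le : rel T) (A B : {set T}) (m : T) : nat :=
  (\sum_(v in A :\ m) LE le (B :\ m :\ v) +
   (if m \in A then \sum_(u in Nset le B m) LE le (B :\ m :\ u) else 0))%N.

Lemma key_identity (T : finType) (le : rel T) (HP : is_porder le) (A B : {set T}) :
  (forall v, v \in A -> 0 < #|B :\ v|)%N ->
  \sum_(v in A) LE le (B :\ v) = \sum_(m in maxs le B) gval le A B m.
Proof.
move=> Hpos.
have step : forall v, v \in A -> LE le (B :\ v) =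
   (\sum_(m in maxs le B) (if m != v then LE le (B :\ m :\ v) else 0) +
    \sum_(u in Nset le B v) LE le (B :\ v :\ u))%N.
  move=> v Hv; rewrite LE_rec ?Hpos // (big_setID (maxs le B)) /=.
  congr (_ + _)%N.
  rewrite -big_mkcondr /=; apply: eq_big => [m|m _]; last by rewrite setD1C.
  rewrite inE; apply/andP/andP => [[Hm1 Hm2]|[Hm1 Hm2]].
  - by split => //; case/andP: (maxsD1_ne Hm1).
  - by split => //; apply: maxsD1.
rewrite (eq_bigr _ step) big_split /= /gval big_split /=.
congr (_ + _)%N.
  rewrite exchange_big /=; apply: eq_bigr => m Hm.
  rewrite -big_mkcondr /=; apply: eq_bigl => v.
  by rewrite !inE andbC eq_sym.
rewrite -big_mkcondr /=.
rewrite (big_setID (maxs le B)) /= [X in (_ + X)%N]big1 ?addn0; last first.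
  move=> v; rewrite inE => /andP [Hv _]; by rewrite N_empty // big_set0.
apply: eq_bigl => v; by rewrite inE andbC.
Qed.

Lemma hg (T : finType) (le : rel T) (A B : {set T}) m :
  (\sum_(w in Xset le A B m) LE le (B :\ m :\ w) +
   (if m \in A then \sum_(w in (A :\ m) :&: Nset le B m) LE le (B :\ m :\ w) else 0)
   = gval le A B m)%N.
Proof.
rewrite /Xset /gval; case: (m \in A); first exact: sum_setU.
by rewrite setU0 !addn0.
Qed.

Lemma main (T : finType) (le : rel T) (HP : is_porder le) n :
  forall B : {set T}, #|B| = n -> forall A : {set T}, A \subset B ->
  [/\ is_antichain le A -> (\sum_(v in A) LE le (B :\ v) <= LE le B)%N,
      cutB le B A -> (LE le B <= \sum_(v in A) LE le (B :\ v))%N,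
      is_antichain le A -> LE le B = \sum_(v in A) LE le (B :\ v) -> cutB le B A &
      cutB le B A -> LE le B = \sum_(v in A) LE le (B :\ v) -> is_antichain le A].
Proof.
elim: n => [|[|n] IH] B HB A HAB.
- have EB : B = set0 by apply/eqP; rewrite -cards_eq0 HB.
  subst B; have EA : A = set0 by apply/eqP; rewrite -subset0.
  subst A; rewrite big_set0.
  have Hc : ~~ cutB le set0 set0.
    apply/negP => /cutBP /(_ set0) [].
    + apply/maxchainP; split => //; first by apply/chainP => x y; rewrite inE.
      move=> D HD; rewrite subset0 => /eqP E; subst D; by rewrite properxx in HD.
    + by move=> x; rewrite inE.
  have Hp := LE_pos HP (set0 : {set T}).
  split => //.
  + by move=> H; rewrite H in Hc.
  + by move=> _ E; rewrite E in Hp.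
  + by move=> H; rewrite H in Hc.
- move/eqP: HB => /cards1P [x EB]; subst B.
  have Em : maxs le [set x] = [set x].
    apply/eqP; rewrite eqEsubset maxs_sub sub1set /=.
    case: (exists_max HP (set11 x)) => m Hm _.
    have Hmx : m = x by apply/set1P; apply: (subsetP (@maxs_sub _ le [set x])).
    by subst m.
  have LEx : LE le [set x] = LE le set0 by rewrite LE_rec ?cards1 // Em big_set1 setDv.
  have Hp := LE_pos HP (set0 : {set T}).
  move: HAB; rewrite subset1 => /orP [/eqP EA|/eqP EA]; subst A.
  + rewrite big_set1 setDv LEx; split => //.
    * move=> _ _; apply/cutBP => C HC; case: (maxchain_nonempty HP (set11 x) HC) => c Hc.
      by exists c => //; move/maxchainP: HC => [HCB _ _]; exact: (subsetP HCB c Hc).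
    * by move=> _ _; apply/antichainP => a b; rewrite !inE => /eqP -> /eqP ->; rewrite eqxx.
  + rewrite big_set0.
    have Hc : ~~ cutB le [set x] set0.
      apply/negP => /cutBP /(_ [set x]) [].
      * apply/maxchainP; split => //.
          by apply/chainP => a b; rewrite !inE => /eqP -> /eqP ->; rewrite /Defs.comparable; case: HP => Hr _ _; rewrite Hr.
        move=> D HD HDs; have := proper_sub_trans HD HDs; by rewrite properxx.
      * by move=> y _; rewrite inE.
    split => //.
    * by move=> H; rewrite H in Hc.
    * by move=> _ E; move: Hp; rewrite -LEx E.
    * by move=> H; rewrite H in Hc.
- have Hsz : forall v, v \in B -> #|B :\ v| = n.+1.
    by move=> v Hv; move: HB; rewrite (cardsD1 v B) Hv add1n => [[]].
  have HBpos : (0 < #|B|)%N by rewrite HB.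
  have Hpos : forall v, v \in A -> (0 < #|B :\ v|)%N.
    by move=> v Hv; rewrite Hsz // (subsetP HAB).
  have KI := key_identity HP Hpos.
  have Hrec := LE_rec le HBpos.
  pose h m := \sum_(w in Xset le A B m) LE le (B :\ m :\ w).
  have HmB : forall m, m \in maxs le B -> m \in B by move=> m /maxsP [].
  have IHm : forall m, m \in maxs le B -> _ := fun m Hm => IH (B :\ m) (Hsz m (HmB m Hm)) (Xset le A B m) (X_sub le m HAB).
  have Hhg : forall m, (h m <= gval le A B m)%N by move=> m; rewrite -hg leq_addr.
  have Hhg_eq : is_antichain le A -> forall m, h m = gval le A B m.
    move=> HA m; rewrite -hg; case: (boolP (m \in A)) => HmA; last by rewrite addn0.
    by rewrite X_disjoint // big_set0 addn0.
  have Hx0 : forall m, m \in maxs le B -> exists x0, x0 \in B :\ m.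
    move=> m Hm; have : (0 < #|B :\ m|)%N by rewrite Hsz ?HmB.
    by rewrite card_gt0 => /set0Pn.
  have : (0 < #|B|)%N by [].
  rewrite card_gt0 => /set0Pn [b0 Hb0].
  split.
  + move=> HA; rewrite KI Hrec (eq_bigr h); last by move=> m _; rewrite Hhg_eq.
    apply: leq_sum => m Hm; case: (IHm m Hm) => H1 _ _ _; apply: H1; exact: X_antichain.
  + move=> HC; rewrite KI Hrec; apply: (@leq_trans (\sum_(m in maxs le B) h m)); apply: leq_sum => m Hm; last exact: Hhg.
    case: (IHm m Hm) => _ H2 _ _; apply: H2.
    case: (Hx0 m Hm) => x0 Hx. exact: (X_cut HP Hm Hx HC).
  + move=> HA HE; apply: (cut_from_X HP Hb0) => m Hm.
    have Hs : \sum_(m in maxs le B) h m = \sum_(m in maxs le B) LE le (B :\ m).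
      by rewrite -Hrec HE KI; apply: eq_bigr => m' _; rewrite Hhg_eq.
    have Hle : forall m, m \in maxs le B -> (h m <= LE le (B :\ m))%N.
      move=> m' Hm'; case: (IHm m' Hm') => H1 _ _ _; apply: H1; exact: X_antichain.
    have E := sum_pointwise Hle Hs Hm.
    case: (IHm m Hm) => _ _ H3 _; apply: H3 => //; exact: X_antichain.
  + move=> HC HE; apply: (anti_from_X HP HAB) => m Hm.
    have Hle1 : forall m, m \in maxs le B -> (LE le (B :\ m) <= h m)%N.
      move=> m' Hm'; case: (IHm m' Hm') => _ H2 _ _; apply: H2.
      case: (Hx0 m' Hm') => x0 Hx; exact: (X_cut HP Hm' Hx HC).
    have Hle : forall m, m \in maxs le B -> (LE le (B :\ m) <= gval le A B m)%N.
      by move=> m' Hm'; apply: leq_trans (Hle1 m' Hm') (Hhg m').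
    have Hs : \sum_(m in maxs le B) LE le (B :\ m) = \sum_(m in maxs le B) gval le A B m.
      by rewrite -Hrec HE KI.
    have E := sum_pointwise Hle Hs Hm.
    have E1 : LE le (B :\ m) = h m.
      by apply/eqP; rewrite eqn_leq Hle1 //= E Hhg.
    have E2 : h m = gval le A B m by rewrite -E1 E.
    split.
    * case: (IHm m Hm) => _ _ _ H4; apply: H4 => //.
      case: (Hx0 m Hm) => x0 Hx; exact: (X_cut HP Hm Hx HC).
    * move=> HmA; move: (hg le A B m); rewrite HmA -E2 /h => /eqP.
      rewrite -[X in _ == X]addn0 eqn_add2l => /eqP; apply: sum_pos_empty => w; exact: LE_pos.
Qed.

Lemma nlinext_LE (T : finType) (le : rel T) : nlinext le = LE le setT.
Proof.
rewrite (@bridge T T le le id (@inj_id T) (fun x y => erefl)).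
by rewrite imset_id.
Qed.

Lemma nlinext_del (T : finType) (le : rel T) (v : T) :
  nlinext (delv_rel le v) = LE le (setT :\ v).
Proof.
rewrite (@bridge T {x : T | x != v} le (delv_rel le v) val val_inj (fun x y => erefl)).
congr LE; apply/setP => t; rewrite !inE andbT.
apply/imsetP/idP => [[u _ ->]|Ht]; first exact: (valP u).
by exists (exist _ t Ht).
Qed.

Lemma cutset_cutB (T : finType) (le : rel T) (S : {set T}) : is_cutset le S = cutB le setT S.
Proof.
rewrite /is_cutset /cutB; apply: eq_forallb => C.
by rewrite /maxchainB /is_maximal_chain subsetT /=; congr (_ && _ ==> _);
  apply: eq_forallb => D; rewrite subsetT andbT.
Qed.

Theorem corollary3p10 (T : finType) (le : rel T) (HP : is_porder le) :
  (forall A : {set T}, is_antichain le A ->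
     (\sum_(v in A) nlinext (delv_rel le v) <= nlinext le)%N) /\
  (forall S : {set T}, is_cutset le S ->
     (nlinext le <= \sum_(v in S) nlinext (delv_rel le v))%N) /\
  (forall I : {set T}, is_cutset le I \/ is_antichain le I ->
     (nlinext le = \sum_(v in I) nlinext (delv_rel le v) <->
      is_cutset le I /\ is_antichain le I)).
Proof.
have Hs : forall A : {set T}, \sum_(v in A) nlinext (delv_rel le v) = \sum_(v in A) LE le (setT :\ v).
  by move=> A; apply: eq_bigr => v _; rewrite nlinext_del.
have M := fun A => @main T le HP #|[set: T]| setT (erefl _) A (subsetT A).
split; [|split].
- move=> A HA; rewrite Hs nlinext_LE; by case: (M A) => H1 _ _ _; apply: H1.
- move=> S; rewrite cutset_cutB Hs nlinext_LE => HS; by case: (M S) => _ H2 _ _; apply: H2.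
- move=> I HI; rewrite Hs nlinext_LE !cutset_cutB; case: (M I) => H1 H2 H3 H4; split.
  + move=> E; rewrite cutset_cutB in HI; case: HI => HI.
    * by split => //; apply: H4.
    * by split => //; apply: H3.
  + move=> [HC HA]; apply/eqP; rewrite eqn_leq H2 //=; exact: H1.
Qed.
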